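(* Let $k=3$, $t\ge 2$, $m=2^t-3$, and let $n$ be an integer with $0\le n\le m$, $i=m-n$. Then in $\mathbb{F}_2[w_2,w_3]$, \[ q_iq_n+q_{i+1}q_{n-1}+w_3q_{i-1}q_{n-2}=0, \] a homogeneous relation of degree $2^t-3$ among $q_{n-2},q_{n-1},q_n$.
   Context: In $\mathbb{F}_2[w_2,w_3]$ ($\deg w_2=2,\deg w_3=3$), $q_0=1$, $q_m=0$ for $m<0$, and $q_m=w_2q_{m-2}+w_3q_{m-3}$ for $m\ge1$. *)

(* Defs.v *)
From HB Require Import structures.
From mathcomp Require Import all_boot all_order all_algebra.
From mathcomp Require Import ssrint zmodp.
From mathcomp Require Import mpoly.
Set Implicit Arguments. Unset Strict Implicit. Unset Printing Implicit Defensive.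
Import GRing.Theory.
Local Open Scope ring_scope.

(* The polynomial ring F_2[w2, w3]: bivariate polynomials over 'F_2,
   with w2 := 'X_0 and w3 := 'X_1 (weights deg w2 = 2, deg w3 = 3 are a
   grading convention only and play no role in the identity). *)
Definition F2W := {mpoly 'F_2[2]}.
Definition w2 : F2W := 'X_(0 : 'I_2).
Definition w3 : F2W := 'X_(1 : 'I_2).

(* q_m for m >= 0, computed from q_0 = 1, q_m = 0 for m < 0 and
   q_m = w2 q_{m-2} + w3 q_{m-3} (m >= 1):
     q_1 = w2 q_{-1} + w3 q_{-2} = 0,  q_2 = w2 q_0 + w3 q_{-1} = w2. *)
Fixpoint qnat (m : nat) : F2W :=
  match m with
  | 0 => 1
  | 1 => 0
  | 2 => w2
  | (m'.+1 as m1).+2 => w2 * qnat m1 + w3 * qnat m'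
  end.

Definition q (m : int) : F2W :=
  match m with
  | Posz k => qnat k
  | Negz _ => 0
  end.

(* Main.v *)
Require Import Defs.
From mathcomp Require Import all_boot all_order all_algebra.
From mathcomp Require Import ssrint zmodp mpoly.
From mathcomp Require Import zify ring.
Local Open Scope ring_scope.
Import GRing.Theory.

Lemma qneg (m : int) : m < 0 -> q m = 0.
Proof. by case: m. Qed.

Lemma qrec (m : int) : 1 <= m -> q m = w2 * q (m - 2) + w3 * q (m - 3).
Proof.
case: m => [k|k] // Hk.
case: k Hk => [|[|[|k]]] // _.
- by rewrite /= !mulr0 addr0.
- by rewrite /= mulr1 mulr0 addr0.
- have -> : (k.+3)%:Z - 2 = (k.+1)%:Z by lia.
  by have -> : (k.+3)%:Z - 3 = k%:Z by lia.
Qed.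

Definition S (a b : int) : F2W :=
  q a * q b + q (a + 1) * q (b - 1) + w3 * q (a - 1) * q (b - 2).

Lemma shift (a b : int) : -1 <= a -> 1 <= b -> S (a + 1) (b - 1) = S a b.
Proof.
move=> Ha Hb; rewrite /S.
have -> : a + 1 + 1 = a + 2 by ring.
have -> : a + 1 - 1 = a by ring.
have -> : b - 1 - 1 = b - 2 by ring.
have -> : b - 1 - 2 = b - 3 by ring.
rewrite (@qrec (a + 2)); last by lia.
rewrite (@qrec b) //.
have -> : a + 2 - 2 = a by ring.
have -> : a + 2 - 3 = a - 1 by ring.
ring.
Qed.

Lemma Ssum (k : nat) (a : int) : 0 <= a -> S a k%:Z = q (a + k%:Z).
Proof.
elim: k a => [|k IH] a Ha.
  rewrite /S addr0 (@qneg (0%:Z - 1)) // (@qneg (0%:Z - 2)) //.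
  by rewrite /= mulr1 !mulr0 !addr0.
rewrite -shift; last by lia. 2: by lia.
have -> : k.+1%:Z - 1 = k%:Z by lia.
rewrite IH; last by lia.
congr q; lia.
Qed.

Lemma two0 : (2%:R : F2W) = 0.
Proof.
have h : (2%:R : 'F_2) = 0 by apply: (@pchar_Fp_0 2).

by rewrite -(rmorph_nat (@mpolyC 2 'F_2)) h rmorph0.
Qed.

Lemma dbl (N : int) : 0 <= N -> q (2 * N + 1) = w3 * q (N - 1) ^+ 2.
Proof.
move=> HN.
case: N HN => [k|k] // _.
have := @Ssum k.+1 k%:Z isT.
rewrite /S.
have -> : k.+1%:Z - 1 = k%:Z by lia.
have -> : k.+1%:Z - 2 = k%:Z - 1 by lia.
have -> : k%:Z + 1 = k.+1%:Z by lia.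
have -> : k%:Z + k.+1%:Z = 2 * k%:Z + 1 by lia.
move=> <-.
have -> : q k * q k.+1 + q k.+1 * q k = 2%:R * (q k * q k.+1) by ring.
by rewrite two0 mul0r add0r expr2 mulrA.
Qed.

Lemma qzero (t : nat) : (2 <= t)%N -> q ((2 ^ t)%:Z - 3) = 0.
Proof.
elim: t => [|t IH] // Ht.
case: (ltnP t 2) => Ht2.
  have -> : t = 1%N by lia.
  by [].
have P4 : (4 <= 2 ^ t)%N.
  by rewrite -[4%N]/(2 ^ 2)%N leq_exp2l.
rewrite expnS.
have -> : (2 * 2 ^ t)%N%:Z - 3 = 2 * ((2 ^ t)%:Z - 2) + 1 by lia.
rewrite dbl; last by lia.
have -> : (2 ^ t)%:Z - 2 - 1 = (2 ^ t)%:Z - 3 by lia.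
by rewrite IH // expr2 !mulr0.
Qed.

Theorem mainTheorem9 (t : nat) (n : int) :
  (2 <= t)%N ->
  let m : int := (2 ^ t)%:Z - 3 in
  0 <= n -> n <= m ->
  let i := m - n in
  q i * q n + q (i + 1) * q (n - 1) + w3 * q (i - 1) * q (n - 2) = 0.
Proof.
intros Ht; cbv zeta; intros Hn Hnm.
case: n Hn Hnm => [k|k] // _ Hk.
rewrite -[_ * _ + _ + _]/(S ((2 ^ t)%:Z - 3 - k%:Z) k%:Z).
rewrite Ssum; last by lia.
rewrite subrK.
exact: qzero.
Qed.
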